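(* Let $X$ be a set, $T:\mathcal P(X)\to\mathcal P(X)$ an order reversing quasi involution, and $X_0=\{x\in X: x\in T(\{x\})\}$. Call $K\subseteq X$ invariant if $TK=K$. (1) If $TX_0=X_0$, then $X_0$ is the unique invariant set. (2) If $TX_0\not\subseteq X_0$, then there is no invariant set. (3) There exist a set $X$ and an order reversing quasi involution $T$ on $\mathcal P(X)$ with $TX_0\subsetneq X_0$ having no invariant set; there exist such $X,T$ with $TX_0\subsetneq X_0$ having exactly one invariant set; and there exist such $X,T$ with $TX_0\subsetneq X_0$ having more than one invariant set.
   Context: $\mathcal P(X)$ denotes the power set of $X$. A map $T:\mathcal P(X)\to\mathcal P(X)$ is an order reversing quasi involution if for all $K,L\subseteq X$: (i) $K\subseteq TTK$, and (ii) $L\subseteq K$ implies $TK\subseteq TL$. *)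

(* Defs.v *)
Definition subset {X : Type} (A B : X -> Prop) : Prop := forall x, A x -> B x.
Definition seteq {X : Type} (A B : X -> Prop) : Prop := subset A B /\ subset B A.
Definition setT {X : Type} : X -> Prop := fun _ => True.
Definition set1 {X : Type} (a : X) : X -> Prop := fun x => x = a.

(* Order reversing quasi involution on P(X).  T is required to respect
   extensional equality of subsets (automatic for maps on the power set). *)
Definition order_rev_quasi_inv {X : Type} (T : (X -> Prop) -> (X -> Prop)) : Prop :=
  (forall K : X -> Prop, subset K (T (T K))) /\
  (forall K L : X -> Prop, subset L K -> subset (T K) (T L)).

Definition X0 {X : Type} (T : (X -> Prop) -> (X -> Prop)) : X -> Prop :=
  fun x => T (set1 x) x.

Definition invariant {X : Type} (T : (X -> Prop) -> (X -> Prop)) (K : X -> Prop) : Prop :=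
  seteq (T K) K.

Definition strict_subset {X : Type} (A B : X -> Prop) : Prop :=
  subset A B /\ ~ subset B A.

(* Main.v *)
Require Import Defs.
From Stdlib Require Import Classical.

Lemma inv_bounds {X : Type} (T : (X -> Prop) -> (X -> Prop)) K :
  order_rev_quasi_inv T -> invariant T K ->
  subset K (X0 T) /\ subset (T (X0 T)) K.
Proof.
  intros [H1 H2] [I1 I2].
  assert (S : subset K (X0 T)).
  { intros x Kx. unfold X0. apply (H2 K (set1 x)).
    - intros z ->. exact Kx.
    - apply I2, Kx. }
  split; [exact S|].
  intros y Hy. apply I1. apply (H2 (X0 T) K S). exact Hy.
Qed.

Definition Tr {X : Type} (R : X -> X -> Prop) (K : X -> Prop) : X -> Prop :=
  fun y => forall x, K x -> R x y.

Lemma Tr_ok {X : Type} (R : X -> X -> Prop) :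
  (forall x y, R x y -> R y x) -> order_rev_quasi_inv (Tr R).
Proof.
  intros Hs; split.
  - intros K x Kx y Hy. apply Hs, Hy, Kx.
  - intros K L HLK y Hy x Lx. apply Hy, HLK, Lx.
Qed.

Lemma X0_Tr {X : Type} (R : X -> X -> Prop) y : X0 (Tr R) y <-> R y y.
Proof.
  unfold X0, Tr, set1; split.
  - intros H. apply H. reflexivity.
  - intros H x ->. exact H.
Qed.

Inductive three := t0 | t1 | t2.

Definition R3 (x y : three) : Prop :=
  match x, y with
  | t0, t0 => True | t1, t2 => True | t2, t1 => True | t2, t2 => True
  | _, _ => False
  end.

Definition R4 (x y : bool * bool) : Prop :=
  fst x = fst y /\ (snd x = true \/ snd y = true).

Theorem lemma6p2 :
  (forall (X : Type) (T : (X -> Prop) -> (X -> Prop)),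
     order_rev_quasi_inv T ->
     invariant T (X0 T) ->
     forall K, invariant T K -> seteq K (X0 T)) /\
  (forall (X : Type) (T : (X -> Prop) -> (X -> Prop)),
     order_rev_quasi_inv T ->
     ~ subset (T (X0 T)) (X0 T) ->
     forall K, ~ invariant T K) /\
  (exists (X : Type) (T : (X -> Prop) -> (X -> Prop)),
     order_rev_quasi_inv T /\ strict_subset (T (X0 T)) (X0 T) /\
     forall K, ~ invariant T K) /\
  (exists (X : Type) (T : (X -> Prop) -> (X -> Prop)),
     order_rev_quasi_inv T /\ strict_subset (T (X0 T)) (X0 T) /\
     exists K, invariant T K /\ forall L, invariant T L -> seteq L K) /\
  (exists (X : Type) (T : (X -> Prop) -> (X -> Prop)),
     order_rev_quasi_inv T /\ strict_subset (T (X0 T)) (X0 T) /\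
     exists K L, invariant T K /\ invariant T L /\ ~ seteq K L).
Proof.
  split; [|split; [|split; [|split]]].
  - intros X T HT [I1 I2] K HK.
    destruct (inv_bounds T K HT HK) as [A B].
    split; [exact A|]. intros x Hx. apply B, I2, Hx.
  - intros X T HT Hn K HK.
    destruct (inv_bounds T K HT HK) as [A B].
    apply Hn. intros x Hx. apply A, B, Hx.
  - exists (bool * bool)%type, (Tr R4).
    assert (HT : order_rev_quasi_inv (Tr R4)).
    { apply Tr_ok. intros x y [E O]. split; [auto|tauto]. }
    split; [exact HT|split].
    + split.
      * intros y Hy. exfalso.
        assert (F1 : X0 (Tr R4) (false, true)) by (apply X0_Tr; split; simpl; auto).
        assert (F2 : X0 (Tr R4) (true, true)) by (apply X0_Tr; split; simpl; auto).
        assert (H1 := Hy (false, true) F1).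
        assert (H2 := Hy (true, true) F2).
        destruct H1 as [E1 _], H2 as [E2 _]. simpl in *. rewrite <- E1 in E2. discriminate.
      * intros H.
        assert (H0 : X0 (Tr R4) (true, true)).
        { apply X0_Tr. split; auto. }
        assert (H1 : X0 (Tr R4) (false, true)) by (apply X0_Tr; split; simpl; auto).
        specialize (H _ H0). destruct (H (false,true) H1) as [E _]. discriminate.
    + intros L HL.
      destruct (inv_bounds _ L HT HL) as [A _].
      destruct HL as [I1 I2].
      assert (Hs : forall z, L z -> snd z = true).
      { intros z Lz. apply A, X0_Tr in Lz. destruct Lz as [_ [H|H]]; exact H. }
      destruct (classic (exists x, L x)) as [[x Lx]|Hne].
      * assert (Hc : L (fst x, false)).
        { apply I1. intros z Lz. split.
          - simpl. destruct (I2 z Lz x Lx) as [E _]. symmetry. exact E.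
          - left. apply Hs, Lz. }
        specialize (Hs _ Hc). discriminate.
      * apply Hne. exists (false,false). apply I1. intros z Lz. exfalso. apply Hne. eauto.
  - exists three, (Tr R3).
    assert (HT : order_rev_quasi_inv (Tr R3)).
    { apply Tr_ok. intros [] [] H; simpl in *; auto. }
    split; [exact HT|split].
    + split.
      * intros y Hy. exfalso.
        assert (H1 := Hy t0 (proj2 (X0_Tr R3 t0) I)).
        assert (H2 := Hy t2 (proj2 (X0_Tr R3 t2) I)).
        destruct y; simpl in *; auto.
      * intros H. specialize (H t0 (proj2 (X0_Tr R3 t0) I)).
        specialize (H t2 (proj2 (X0_Tr R3 t2) I)). exact H.
    + exists (fun x => x = t0). split.
      * split.
        -- intros y Hy. specialize (Hy t0 eq_refl). destruct y; simpl in *; tauto.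
        -- intros y -> x ->. exact I.
      * intros L HL.
        destruct (inv_bounds _ L HT HL) as [A _].
        destruct HL as [I1 I2].
        assert (N1 : ~ L t1). { intros H. apply A, X0_Tr in H. exact H. }
        assert (N2 : ~ L t2).
        { intros H. apply N1. apply I1. intros z Lz.
          destruct z; simpl; auto. specialize (I2 t2 H t0 Lz). exact I2. }
        assert (L0 : L t0).
        { apply I1. intros [] Lz; simpl; tauto. }
        split.
        -- intros [] Lz; tauto.
        -- intros y ->. exact L0.
  - exists bool, (Tr (@eq bool)).
    assert (HT : order_rev_quasi_inv (Tr (@eq bool))).
    { apply Tr_ok. intros x y H; symmetry; exact H. }
    split; [exact HT|split].
    + split.
      * intros y Hy. apply X0_Tr. reflexivity.
      * intros H. assert (H0 : forall b, X0 (Tr (@eq bool)) b) by (intro; apply X0_Tr; reflexivity).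
        specialize (H true (H0 true)). specialize (H false (H0 false)). discriminate.
    + exists (fun x => x = true), (fun x => x = false).
      split; [|split].
      * split.
        -- intros y Hy. symmetry. apply Hy. reflexivity.
        -- intros y -> x ->. reflexivity.
      * split.
        -- intros y Hy. symmetry. apply Hy. reflexivity.
        -- intros y -> x ->. reflexivity.
      * intros [H _]. specialize (H true eq_refl). discriminate.
Qed.
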